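(* Assume $V=L$. Let $\zeta\in\Xi$, $X\in\mathrm{IPS}_\zeta$, and let $i\neq j$ be elements of $\zeta$. Then there is $Z\in\mathrm{IPS}_\zeta$ with $Z\subseteq X$, $Z$ clopen in $X$, such that $\{z(i):z\in Z\}\cap\{z(j):z\in Z\}=\varnothing$.
   Context: $T$ is the set of all nonempty finite sequences of countable ordinals, ordered by strict extension $\subset$. $\Xi$ is the set of all at most countable $\xi\subseteq T$ closed downward under $\subset$. $D=2^\omega$; $D^\xi$ is the product of $\xi$ copies of $D$ with the product topology; for $\eta\subseteq\xi$ and $x\in D^\xi$, $x\restriction\eta$ is the restriction. For $\zeta\in\Xi$, $\mathrm{IPS}_\zeta$ is the set of all $X\subseteq D^\zeta$ for which there is a homeomorphism $H$ of $D^\zeta$ onto $X$ such that for all $x_0,x_1\in D^\zeta$ and all $\xi\in\Xi$, $\xi\subseteq\zeta$: $x_0\restriction\xi=x_1\restriction\xi\iff H(x_0)\restriction\xi=H(x_1)\restriction\xi$. *)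

(* Defs.v *)
From HB Require Import structures.
From mathcomp Require Import all_boot all_order all_algebra.
From mathcomp Require Import all_classical all_reals all_analysis.
From Stdlib Require Import List.

Set Implicit Arguments.
Unset Strict Implicit.
Unset Printing Implicit Defensive.

Local Open Scope classical_set_scope.

Definition is_wo (D : nat -> Prop) (R : nat -> nat -> Prop) : Prop :=
  (forall x y, R x y -> D x /\ D y) /\
  (forall x, ~ R x x) /\
  (forall x y z, R x y -> R y z -> R x z) /\
  (forall x y, D x -> D y -> x = y \/ R x y \/ R y x) /\
  well_founded R.

Definition wo_iso (D : nat -> Prop) (R : nat -> nat -> Prop)
    (D' : nat -> Prop) (R' : nat -> nat -> Prop) : Prop :=
  exists f : nat -> nat,
    (forall x, D x -> D' (f x)) /\
    (forall y, D' y -> exists x, D x /\ f x = y) /\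
    (forall x y, D x -> D y -> (R x y <-> R' (f x) (f y))).

(* A countable ordinal = the isomorphism class (order type) of a           *)
(* well-ordering of a subset of nat.                                       *)
Definition countable_ordinal : Type :=
  { C : (nat -> Prop) -> (nat -> nat -> Prop) -> Prop |
    exists D R, is_wo D R /\ forall D' R', C D' R' <-> wo_iso D R D' R' }.

Definition T : Type := { s : list countable_ordinal | s <> nil }.

Definition strict_ext (s t : T) : Prop :=
  exists u : list countable_ordinal, u <> nil /\ proj1_sig t = proj1_sig s ++ u.

Definition Xi (xi : set T) : Prop :=
  countable xi /\ (forall s t, strict_ext s t -> xi t -> xi s).

Definition idx (zeta : set T) : Type := { t : T | zeta t }.

Definition Dpow (zeta : set T) : Type :=
  prod_topology (fun _ : idx zeta => cantor_space).

Definition restr_eq (zeta xi : set T) (x0 x1 : Dpow zeta) : Prop :=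
  forall i : idx zeta, xi (proj1_sig i) -> x0 i = x1 i.

Definition homeo_onto (zeta : set T) (H : Dpow zeta -> Dpow zeta)
    (X : set (Dpow zeta)) : Prop :=
  continuous H /\ injective H /\ H @` setT = X /\
  exists G : Dpow zeta -> Dpow zeta,
    {within X, continuous G} /\ (forall x, G (H x) = x).

Definition IPS (zeta : set T) (X : set (Dpow zeta)) : Prop :=
  exists H : Dpow zeta -> Dpow zeta,
    homeo_onto H X /\
    forall (x0 x1 : Dpow zeta) (xi : set T), Xi xi -> xi `<=` zeta ->
      (restr_eq xi x0 x1 <-> restr_eq xi (H x0) (H x1)).

Definition clopen_in (zeta : set T) (X Z : set (Dpow zeta)) : Prop :=
  Z `<=` X /\ @clopen (subspace X) Z.

(* Main.v *)
Require Import Defs.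
From HB Require Import structures.
From mathcomp Require Import all_boot all_order all_algebra.
From mathcomp Require Import all_classical all_reals all_analysis.
From Stdlib Require Import List.
Local Open Scope classical_set_scope.
Set Implicit Arguments.
Unset Strict Implicit.

Definition pre (m : nat) (c : cantor_space) : set cantor_space :=
  [set d | forall b, (b < m)%N -> d b = c b].

Lemma cantor_nbhs (c : cantor_space) (W : set cantor_space) :
  nbhs c W -> exists m, pre m c `<=` W.
Proof.
pose CF := filter_from [set: nat] (fun m => pre m c).
have FF : Filter CF.
  apply: filter_from_filter; first by exists 0%N.
  move=> m1 m2 _ _; exists (maxn m1 m2) => // d Hd; split => b Hb; apply: Hd.
    by apply: (leq_trans Hb); rewrite leq_maxl.
  by apply: (leq_trans Hb); rewrite leq_maxr.
have : CF --> c.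
  apply/cvg_sup => b U [V] [[W'] oW' <-] WfN WU.
  exists b.+1 => // d Hd; apply: WU => /=.
  by rewrite /= Hd.
by move=> /(_ W) h /h [m _ Hm]; exists m.
Qed.

Definition cyl (zeta : set T) (F : list (idx zeta)) (m : nat) (x : Dpow zeta) : set (Dpow zeta) :=
  [set y | forall k, List.In k F -> forall b, (b < m)%N -> y k b = x k b].

Lemma Dpow_nbhs (zeta : set T) (x : Dpow zeta) (W : set (Dpow zeta)) :
  nbhs x W -> exists F m, cyl F m x `<=` W.
Proof.
pose CF := filter_from [set: list (idx zeta) * nat] (fun p => cyl p.1 p.2 x).
have FF : Filter CF.
  apply: filter_from_filter; first by exists (nil, 0%N).
  move=> [F1 m1] [F2 m2] _ _; exists (F1 ++ F2, maxn m1 m2) => // d Hd; split => k Hk b Hb; apply: Hd => /=.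
  - by apply: in_or_app; left.
  - by apply: (leq_trans Hb); rewrite leq_maxl.
  - by apply: in_or_app; right.
  - by apply: (leq_trans Hb); rewrite leq_maxr.
have : CF --> x.
  apply/cvg_sup => k U [V] [[W'] oW' <-] WfN WU.
  have [m Hm] : exists m, pre m (x k) `<=` W'.
    apply: cantor_nbhs; exact: open_nbhs_nbhs.
  exists ([:: k], m) => // d Hd; apply: WU; apply: Hm => b Hb.
  by apply: Hd => //=; left.
by move=> /(_ W) h /h [[F m] _ Hm]; exists F, m.
Qed.

Lemma cyl_clopen (zeta : set T) F m (x : Dpow zeta) : clopen (cyl F m x).
Proof.
have pt k b : clopen [set y : Dpow zeta | y k b = x k b].
  have -> : [set y : Dpow zeta | y k b = x k b] = (fun y : Dpow zeta => y k b) @^-1` [set x k b] by [].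
  apply: preimage_clopen; first by split; [exact: discrete_open | exact: discrete_closed].
  move=> y; apply: (@continuous_comp _ _ _ (fun y : Dpow zeta => y k) (fun c : cantor_space => c b)).
    exact: (@proj_continuous {classic (idx zeta)} (fun _ => cantor_space) k).
  exact: (@proj_continuous nat (fun _ => bool) b).
elim: F => [|k F IH].
  have -> : cyl [::] m x = setT by apply/seteqP; split => // y _ k [].
  exact: clopenT.
have -> : cyl (k :: F) m x = [set y | forall b, (b < m)%N -> y k b = x k b] `&` cyl F m x.
  apply/seteqP; split => y.
    by move=> Hy; split => [b Hb|k' Hk' b Hb]; apply: Hy => //=; [left|right].
  by move=> [H1 H2] k' [<-|Hk'] b Hb; [apply: H1 | apply: H2].
apply: clopenI; last exact: IH.
clear IH.
elim: m => [|m IHm].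
  have -> : [set y : Dpow zeta | forall b, (b < 0)%N -> y k b = x k b] = setT by apply/seteqP; split.
  exact: clopenT.
have -> : [set y : Dpow zeta | forall b, (b < m.+1)%N -> y k b = x k b] =
   [set y | forall b, (b < m)%N -> y k b = x k b] `&` [set y : Dpow zeta | y k m = x k m].
  apply/seteqP; split => y.
    move=> Hy; split => [b Hb|]; apply: Hy => //; exact: ltnW.
  move=> [H1 H2] b; rewrite ltnS leq_eqVlt => /orP [/eqP ->|]//; exact: H1.
exact: clopenI.
Qed.

Lemma strict_ext_trans s t u : strict_ext s t -> strict_ext t u -> strict_ext s u.
Proof.
move=> [u1 [n1 e1]] [u2 [n2 e2]]; exists (u1 ++ u2); split.
  by case: u1 n1 {e1}.
by rewrite e2 e1 app_assoc.
Qed.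

Lemma strict_ext_irr s : ~ strict_ext s s.
Proof.
move=> [u [nu e]]; apply: nu.
have := f_equal (@length _) e; rewrite length_app => /eqP.
by rewrite -{1}(addn0 (length _)) eqn_add2l => /eqP/esym; case: u {e}.
Qed.

Lemma idx_inj (zeta : set T) (a b : idx zeta) : proj1_sig a = proj1_sig b -> a = b.
Proof.
case: a b => a pa [b pb] /= e; subst b.
by rewrite (Prop_irrelevance pa pb).
Qed.

Lemma exists_diff (zeta : set T) (H : Dpow zeta -> Dpow zeta) (a b : idx zeta) :
  Xi zeta ->
  (forall (x0 x1 : Dpow zeta) (xi : set T), Xi xi -> xi `<=` zeta ->
      (restr_eq xi x0 x1 <-> restr_eq xi (H x0) (H x1))) ->
  a <> b -> ~ strict_ext (proj1_sig b) (proj1_sig a) ->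
  exists x, H x a <> H x b.
Proof.
move=> [cz dz] HH nab nba.
case: (pselect (exists x, H x a <> H x b)) => // Hn; exfalso.
have E : forall x, H x a = H x b.
  by move=> x; apply: contrapT => ne; apply: Hn; exists x.
pose xi := fun s : T => zeta s /\ (strict_ext s (proj1_sig a) \/ s = proj1_sig a \/ strict_ext s (proj1_sig b)).
pose xi2 := fun s : T => zeta s /\ (strict_ext s (proj1_sig a) \/ s = proj1_sig a \/ strict_ext s (proj1_sig b) \/ s = proj1_sig b).
have xiz : xi `<=` zeta by move=> s [].
have xi2z : xi2 `<=` zeta by move=> s [].
have Xxi : Xi xi.
  split; first by apply: sub_countable cz; apply: subset_card_le.
  move=> s t st [zt Ht]; split; first exact: dz zt.
  case: Ht => [Ht|[Ht|Ht]].
  - by left; apply: strict_ext_trans Ht.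
  - by left; rewrite -Ht.
  - by right; right; apply: strict_ext_trans Ht.
have Xxi2 : Xi xi2.
  split; first by apply: sub_countable cz; apply: subset_card_le.
  move=> s t st [zt Ht]; split; first exact: dz zt.
  case: Ht => [Ht|[Ht|[Ht|Ht]]].
  - by left; apply: strict_ext_trans Ht.
  - by left; rewrite -Ht.
  - by right; right; left; apply: strict_ext_trans Ht.
  - by right; right; left; rewrite -Ht.
pose x0 : Dpow zeta := fun _ _ => false.
pose x1 : Dpow zeta := fun k => if pselect (k = b) then (fun _ => true) else (fun _ => false).
have r01 : restr_eq xi x0 x1.
  move=> k [_ Hk]; rewrite /x1; case: pselect => // kb; subst k; exfalso.
  case: Hk => [Hk|[Hk|Hk]].
  - exact: nba.
  - by apply: nab; apply: idx_inj.
  - exact: (strict_ext_irr Hk).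
have /(HH _ _ _ Xxi xiz) Hr := r01.
have r2 : restr_eq xi2 (H x0) (H x1).
  move=> k [zk Hk]; case: Hk => [Hk|[Hk|[Hk|Hk]]].
  - by apply: Hr; split => //; left.
  - by apply: Hr; split => //; right; left.
  - by apply: Hr; split => //; right; right.
  - have -> : k = b by apply: idx_inj.
    rewrite -!E; apply: Hr; split; last by right; left.
    exact: proj2_sig a.
have := (proj2 (HH _ _ _ Xxi2 xi2z) r2 b).
have xb : xi2 (proj1_sig b) by split; [exact: proj2_sig b | right; right; right].
move=> /(_ xb); rewrite /x0 /x1; case: pselect => // _ /(congr1 (fun f => f 0%N)).
by [].
Qed.

Lemma evalc (zeta : set T) (k : idx zeta) (b : nat) : continuous (fun y : Dpow zeta => y k b).
Proof.
move=> y; apply: (@continuous_comp _ _ _ (fun y : Dpow zeta => y k) (fun c : cantor_space => c b)).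
  exact: (@proj_continuous {classic (idx zeta)} (fun _ => cantor_space) k).
exact: (@proj_continuous nat (fun _ => bool) b).
Qed.

Lemma into_cantor (A : topologicalType) (f : A -> cantor_space) :
  (forall b, continuous (fun a => f a b)) -> continuous f.
Proof.
move=> h a; apply/cvg_sup => b U [V] [[W] oW <-] WfN WU.
apply: (filterS WU).
have := h b a W; apply.
exact: open_nbhs_nbhs.
Qed.

Lemma into_Dpow (zeta : set T) (A : topologicalType) (f : A -> Dpow zeta) :
  (forall k, continuous (fun a => f a k)) -> continuous f.
Proof.
move=> h a; apply/cvg_sup => b U [V] [[W] oW <-] WfN WU.
apply: (filterS WU).
have := h b a W; apply.
exact: open_nbhs_nbhs.
Qed.

Unset Implicit Arguments.
Set Strict Implicit.

Theorem corollary2p22 (zeta : set T) (X : set (Dpow zeta)) (i j : idx zeta) :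
  Xi zeta -> IPS X -> i <> j ->
  exists Z : set (Dpow zeta),
    IPS Z /\ Z `<=` X /\ clopen_in X Z /\
    [set z i | z in Z] `&` [set z j | z in Z] = set0.
Proof.
move=> Xz [H [[Hc [Hinj [Himg [G [Gc GH]]]]] HH]] nij.
have [x Hx] : exists x, H x i <> H x j.
  case: (pselect (strict_ext (proj1_sig j) (proj1_sig i))) => sji.
    have nsij : ~ strict_ext (proj1_sig i) (proj1_sig j).
      by move=> sij; apply: (strict_ext_irr (strict_ext_trans sij sji)).
    have [x Hx] := exists_diff Xz HH (nesym nij) nsij.
    by exists x => e; apply: Hx; rewrite e.
  exact: exists_diff Xz HH nij sji.
have [n Hn] : exists n, H x i n <> H x j n.
  case: (pselect (exists n, H x i n <> H x j n)) => // Hn; exfalso; apply: Hx.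
  by apply: functional_extensionality_dep => n; apply: contrapT => ne; apply: Hn; exists n.
pose V' := [set y | H y i n = H x i n /\ H y j n = H x j n].
have nV : nbhs x V'.
  apply: open_nbhs_nbhs; split => //.
  have -> : V' = (fun y => H y i n) @^-1` [set H x i n] `&` (fun y => H y j n) @^-1` [set H x j n] by [].
  apply: openI.
    apply: (@open_comp _ _ (fun y => H y i n)); last exact: discrete_open.
    by move=> y _; apply: (@continuous_comp _ _ _ H (fun z : Dpow zeta => z _ n)); [exact: Hc | exact: evalc].
  apply: (@open_comp _ _ (fun y => H y j n)); last exact: discrete_open.
  by move=> y _; apply: (@continuous_comp _ _ _ H (fun z : Dpow zeta => z _ n)); [exact: Hc | exact: evalc].
have [F [m cV]] := Dpow_nbhs nV.
pose W := cyl F m x.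
pose phik (k : idx zeta) (c : cantor_space) : cantor_space :=
  if pselect (List.In k F) then (fun b => if (b < m)%N then x k b else c (b - m)%N) else c.
pose psik (k : idx zeta) (c : cantor_space) : cantor_space :=
  if pselect (List.In k F) then (fun b => c (b + m)%N) else c.
have psiphi k c : psik k (phik k c) = c.
  rewrite /psik /phik; destruct (pselect (List.In k F)) as [kF|kF]; last by []; rewrite /=.
  apply: functional_extensionality_dep => b.
  by rewrite /= ltnNge leq_addl /= addnK.
pose phi (y : Dpow zeta) : Dpow zeta := fun k => phik k (y k).
pose psi (z : Dpow zeta) : Dpow zeta := fun k => psik k (z k).
have psiphiE y : psi (phi y) = y.
  by apply: functional_extensionality_dep => k; rewrite /psi /phi psiphi.
have phiW y : W (phi y).
  move=> k kF b bm; rewrite /phi /phik; destruct (pselect (List.In k F)) as [kF'|kF']; last by []; rewrite /=.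
  by rewrite bm.
have phipsi w : W w -> phi (psi w) = w.
  move=> Ww; apply: functional_extensionality_dep => k.
  rewrite /phi /psi /phik /psik; destruct (pselect (List.In k F)) as [kF|kF]; last by []; rewrite /=.
  apply: functional_extensionality_dep => b.
  case: ifP => bm; first by rewrite Ww.
  by rewrite subnK // leqNgt bm.
have phic : continuous phi.
  apply: into_Dpow => k; rewrite /phi /phik; destruct (pselect (List.In k F)) as [kF|kF]; rewrite /=; last first.
    exact: (@proj_continuous {classic (idx zeta)} (fun _ => cantor_space) k).
  apply: into_cantor => b; case bm: (b < m)%N; first exact: cst_continuous.
  exact: evalc.
have psic : continuous psi.
  apply: into_Dpow => k; rewrite /psi /psik; destruct (pselect (List.In k F)) as [kF|kF]; rewrite /=; last first.
    exact: (@proj_continuous {classic (idx zeta)} (fun _ => cantor_space) k).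
  apply: into_cantor => b; exact: evalc.
pose Z := H @` (phi @` setT).
have ZX : Z `<=` X by rewrite -Himg => z [w [y _ <-] <-]; exists (phi y).
exists Z; split; [|split; [exact: ZX|split]].
- exists (H \o phi); split.
    split; first by move=> y; apply: continuous_comp; [exact: phic | exact: Hc].
    split; first by move=> y1 y2 /= /Hinj e; rewrite -(psiphiE y1) e psiphiE.
    split; first by rewrite -image_comp.
    exists (psi \o G); split; last by move=> y /=; rewrite GH psiphiE.
    have GcZ : {within Z, continuous G} by apply: continuous_subspaceW Gc.
    move=> z; apply: (@continuous_comp (subspace Z) _ _ G psi); [exact: GcZ | exact: psic].
  move=> x0 x1 xi Xxi xiz /=; rewrite -HH //.
  split => h k hk; first by rewrite /phi (h k hk).
  by have := congr1 (psik k) (h k hk); rewrite /phi !psiphi.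
- split; first exact: ZX.
  have -> : Z = X `&` G @^-1` W.
    apply/seteqP; split => z.
      move=> [w [y _ <-] <-]; split; first by apply: ZX; exists (phi y) => //; exists y.
      by rewrite /= GH.
    move=> [Xz' WG]; move: Xz'; rewrite -Himg => -[w _ ezw].
    rewrite -ezw in WG *; rewrite /= GH in WG.
    by exists w => //; exists (psi w) => //; rewrite phipsi.
  apply: clopenI; first by split; [exact: open_subspaceT | exact: closed_subspaceT].
  apply: (@preimage_clopen (subspace X) _ G); first exact: cyl_clopen.
  exact: Gc.
- apply/seteqP; split => c // [[z1 [w1 [y1 _ e1] ez1] c1] [z2 [w2 [y2 _ e2] ez2] c2]].
  have [h1 _] := cV _ (phiW y1).
  have [_ h2] := cV _ (phiW y2).
  apply: Hn; rewrite -h1 -h2 e1 e2 ez1 ez2 c1 c2 //.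
Qed.
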